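(* Under the setting in the context, for all $\varepsilon>0$, $t>0$ and $x\in\mathbb{R}$, \[ \frac{\Phi(t/\varepsilon)}{\Phi(0)}\exp\!\left(\frac1\varepsilon[\psi_\varepsilon(t,x)-\psi_\varepsilon(0,x)]\right)\le\mathfrak{B}_\varepsilon(\psi_\varepsilon)(t,x)\le\frac{\Phi(1+t/\varepsilon)}{\Phi(1)}\exp\!\left(\frac1\varepsilon[\psi_\varepsilon(t,x)-\psi_\varepsilon(0,x)]\right). \]
   Context: Fix $\mu\in(0,1)$, $\sigma>0$. Let $\beta(a)=\mu/(1+a)$, $\Phi(a)=\beta(a)\exp(-\int_0^a\beta)=\mu(1+a)^{-1-\mu}$, $\omega(z)=\frac{1}{\sigma\sqrt{2\pi}}e^{-z^2/(2\sigma^2)}$. For each $\varepsilon>0$ let $\phi^0_\varepsilon(x,a)$, $x\in\mathbb{R}$, $a\in[0,1)$, be an initial datum $\phi^0_\varepsilon=v+\varepsilon\eta$ with $v$ bounded, $\exp(-\inf_x\eta(x,\cdot))\in L^1$, $\phi^0_\varepsilon$ Lipschitz in $x$ uniformly in $\varepsilon\in(0,1)$, there is $C>0$ with $\int_0^1\int\Phi(a)\omega(z)e^{\int_0^a\beta}e^{-\eta(x-\varepsilon z,a)}\,\mathrm{d}z\,\mathrm{d}a>e^{-C/\varepsilon}$ for all $\varepsilon,x$, and $\partial_x^2\phi^0_\varepsilon\le\mathfrak{C}_{xx}$ distributionally. Let $n_\varepsilon\ge0$ solve $\partial_tn_\varepsilon+\frac1\varepsilon\partial_an_\varepsilon+\frac1\varepsilon\beta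 n_\varepsilon=0$, $n_\varepsilon(t,x,0)=\int_0^\infty\int\beta(a)\omega(z)n_\varepsilon(t,x-\varepsilon z,a)\,\mathrm{d}z\,\mathrm{d}a$, $n_\varepsilon(0,x,a)=e^{-\phi^0_\varepsilon(x,a)/\varepsilon}\mathbf{1}_{a<1}$; set $\psi_\varepsilon(t,x)=-\varepsilon\ln n_\varepsilon(t,x,0)$. In particular $e^{-\psi_\varepsilon(0,x)/\varepsilon}=\int_0^1\int_{\mathbb{R}}\Phi(a)\omega(z)e^{-\phi^0_\varepsilon(x-\varepsilon z,a)/\varepsilon}e^{\int_0^a\beta}\,\mathrm{d}z\,\mathrm{d}a$. Define $\mathfrak{B}_\varepsilon(\psi_\varepsilon)(t,x)=\int_0^1\int_{\mathbb{R}}\omega(z)\Phi(a+t/\varepsilon)\exp\left(\frac1\varepsilon[\psi_\varepsilon(t,x)-\phi^0_\varepsilon(x-\varepsilon z,a)]\right)\exp\left(\int_0^a\beta\right)\mathrm{d}z\,\mathrm{d}a$. *)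

(* Defs.v *)
From HB Require Import structures.
From mathcomp Require Import all_boot all_order all_algebra.
From mathcomp Require Import all_classical all_reals all_analysis.
Set Implicit Arguments. Unset Strict Implicit. Unset Printing Implicit Defensive.
Import Order.TTheory GRing.Theory Num.Theory.
Import numFieldNormedType.Exports.
Local Open Scope classical_set_scope.
Local Open Scope ring_scope.

Section Defs.
Variable R : realType.
Notation leb := (@lebesgue_measure R).

Definition I0inf : set R := `[0, +oo[.
Definition I01 : set R := `[0, 1[.

Definition beta (mu a : R) : R := mu / (1 + a).
(* exp(int_0^a beta) = exp(mu ln(1+a)), since int_0^a mu/(1+s) ds = mu ln(1+a) *)
Definition expIntBeta (mu a : R) : R := expR (mu * ln (1 + a)).
(* Phi(a) = beta(a) exp(-int_0^a beta) = mu (1+a)^(-1-mu) *)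
Definition Phi (mu a : R) : R := mu * powR (1 + a) (- 1 - mu).
Definition omega (sigma z : R) : R :=
  (sigma * Num.sqrt (2 * pi))^-1 * expR (- (z ^+ 2) / (2 * sigma ^+ 2)).

Definition nonneg_test_function (th : R -> R) : Prop :=
  (forall (k : nat) (x : R), derivable (derive1n k th) x 1) /\
  (exists K : R, forall x : R, K < `|x| -> th x = 0) /\
  (forall x : R, 0 <= th x).

Definition dist_d2_le (f : R -> R) (C : R) : Prop :=
  forall th : R -> R, nonneg_test_function th ->
    (\int[leb]_(x in setT) (f x * derive1n 2 th x)%:E
      <= \int[leb]_(x in setT) (C * th x)%:E)%E.

(* n : (t, x, a) |-> n(t,x,a) is a (mild / characteristics) solution of
     d_t n + (1/eps) d_a n + (1/eps) beta n = 0,   t >= 0, a >= 0,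
     n(t,x,0) = int_0^oo int_R beta(a) omega(z) n(t,x-eps z,a) dz da,
     n(0,x,a) = exp(-phi0(x,a)/eps) 1_{a<1}      (a > 0). *)
Definition renewal_solution (mu sigma eps : R) (phi0 : R -> R -> R)
    (n : R -> R -> R -> R) : Prop :=
  (forall t x a, 0 <= t -> 0 <= a -> 0 <= n t x a) /\
  (* transport equation, integrated along characteristics (t+s, a+s/eps) *)
  (forall t x a s, 0 <= t -> 0 <= a -> 0 <= s ->
     n (t + s) x (a + s / eps) * expIntBeta mu (a + s / eps)
       = n t x a * expIntBeta mu a) /\
  (forall t x, 0 <= t ->
     (n t x 0)%:E = (\int[leb]_(a in I0inf)
                      \int[leb]_(z in setT)
                        (beta mu a * omega sigma z * n t (x - eps * z) a)%:E)%E) /\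
  (forall x a, 0 < a ->
     n 0 x a = if a < 1 then expR (- phi0 x a / eps) else 0).

Definition psi (eps : R) (n : R -> R -> R -> R) (t x : R) : R :=
  - eps * ln (n t x 0).

Definition frakB (mu sigma eps : R) (phi0 : R -> R -> R) (ps : R -> R -> R)
    (t x : R) : \bar R :=
  (\int[leb]_(a in I01)
    \int[leb]_(z in setT)
      (omega sigma z * Phi mu (a + t / eps)
        * expR ((ps t x - phi0 (x - eps * z) a) / eps)
        * expIntBeta mu a)%:E)%E.

End Defs.

(* Main.v *)
Require Import Defs.
From HB Require Import structures.
From mathcomp Require Import all_boot all_order all_algebra.
From mathcomp Require Import all_classical all_reals all_analysis.
Import Order.TTheory GRing.Theory Num.Theory.
Import numFieldNormedType.Exports.
Local Open Scope classical_set_scope.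
Local Open Scope ring_scope.

From mathcomp Require Import ring lra.
From mathcomp Require Import measurable_realfun lebesgue_integral.
Section H.
Context {R : realType}.
Notation leb := (@lebesgue_measure R).
Local Open Scope ereal_scope.

Lemma mF (f : R * R -> R) : measurable_fun setT f -> (forall p, (0 <= f p)%R) ->
  measurable_fun (setT : set (measurableTypeR R)) (fun a => \int[leb]_(z in setT) (f (a, z))%:E).
Proof.
move=> mf f0.
have := @measurable_fun_fubini_tonelli_F _ _ (measurableTypeR R) (measurableTypeR R) R leb (EFin \o f).
apply.
- exact: measurableT_comp.
- by move=> p /=; rewrite lee_fin.
Qed.

Lemma mG (f : R * R -> R) a : measurable_fun setT f ->
  measurable_fun setT (fun z => (f (a, z))%:E).
Proof.
move=> mf; apply: measurableT_comp => //.
exact: (measurable_fun_pair2 a mf).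
Qed.

Lemma scale2 (D : set R) (f : R * R -> R) (c : R) : measurable D ->
  measurable_fun setT f -> (forall p, (0 <= f p)%R) -> (0 <= c)%R ->
  \int[leb]_(a in D) \int[leb]_(z in setT) ((c * f (a, z))%:E) =
  c%:E * \int[leb]_(a in D) \int[leb]_(z in setT) (f (a, z))%:E.
Proof.
move=> mD mf f0 c0.
transitivity (\int[leb]_(a in D) (c%:E * \int[leb]_(z in setT) (f (a, z))%:E)).
  apply: eq_integral => a _.
  rewrite -ge0_integralZl //. all: try (exact: mG). all: try (by move=> *; rewrite lee_fin).
rewrite ge0_integralZl //. all: try (by move=> a _; apply: integral_ge0 => z _; rewrite lee_fin). all: try (by rewrite lee_fin). have H := mF _ mf f0. eapply measurable_funS; last exact H. exact: (@measurableT _ (measurableTypeR R)). by [].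
Qed.

Lemma mono2 (D : set R) (f1 f2 : R * R -> R) : measurable D ->
  measurable_fun setT f1 -> measurable_fun setT f2 ->
  (forall p, (0 <= f1 p)%R) -> (forall p, (0 <= f2 p)%R) ->
  (forall a z, D a -> (f1 (a, z) <= f2 (a, z))%R) ->
  \int[leb]_(a in D) \int[leb]_(z in setT) (f1 (a, z))%:E <=
  \int[leb]_(a in D) \int[leb]_(z in setT) (f2 (a, z))%:E.
Proof.
move=> mD mf1 mf2 f10 f20 le12.
apply: ge0_le_integral => //.
- by move=> a _; apply: integral_ge0 => z _; rewrite lee_fin.
- have H := mF _ mf1 f10; eapply measurable_funS; last exact H; [exact: (@measurableT _ (measurableTypeR R))|by []].
- have H := mF _ mf2 f20; eapply measurable_funS; last exact H; [exact: (@measurableT _ (measurableTypeR R))|by []].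
move=> a Da; apply: ge0_le_integral => //.
- by move=> z _; rewrite lee_fin.
- exact: mG.
- exact: mG.
by move=> z _; rewrite lee_fin le12.
Qed.

Lemma pos_int (D : set R) (f : R -> \bar R) : measurable D -> leb D != 0 ->
  measurable_fun D f -> (forall x, D x -> 0 < f x) ->
  0 < \int[leb]_(x in D) f x.
Proof.
move=> mD D0 mf fpos.
rewrite lt_neqAle integral_ge0 ?andbT; last by move=> x /fpos/ltW.
apply/negP => /eqP /esym H.
have : \int[leb]_(x in D) `|f x| = 0.
  rewrite -H; apply: eq_integral => x /set_mem Dx.
  by rewrite gee0_abs // ltW // fpos.
move/(ae_eq_integral_abs leb mD mf) => [N [mN N0 sN]].
move/eqP: D0; apply; apply: (subset_measure0 _ _ _ N0) => //.
move=> x Dx; apply: sN => /= /(_ Dx) fx0.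
by move: (fpos x Dx); rewrite fx0 ltxx.
Qed.

Local Open Scope ring_scope.
Lemma Phi_exp (mu y : R) : -1 < y -> Phi mu y = mu * expR ((-1 - mu) * ln (1 + y)).
Proof.
move=> hy; rewrite /Phi /powR; case: eqP => // h; exfalso; lra.
Qed.

Lemma lnMp (u v : R) : 0 < u -> 0 < v -> ln (u * v) = ln u + ln v.
Proof. by move=> hu hv; rewrite lnM // posrE. Qed.

Lemma ler_lnp (u v : R) : 0 < u -> 0 < v -> (ln u <= ln v) = (u <= v).
Proof. by move=> hu hv; rewrite ler_ln // posrE. Qed.

Lemma Phi_lo (mu s a : R) : 0 < mu -> 0 <= s -> 0 <= a ->
  Phi mu s / Phi mu 0 * Phi mu a <= Phi mu (a + s).
Proof.
move=> m0 s0 a0.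
have P0 : Phi mu 0 = mu by rewrite Phi_exp ?addr0 ?ln1 ?mulr0 ?expR0 ?mulr1 //; lra.
rewrite P0 !Phi_exp; try lra.
set c := (-1 - mu).
rewrite [X in X <= _](_ : _ = mu * (expR (c * ln (1 + s)) * expR (c * ln (1 + a)))); last first.
  by field; rewrite gt_eqF.
apply: ler_wpM2l; first lra.
rewrite -expRD ler_expR -mulrDr -lnMp; try lra.
rewrite ler_nM2l; last by rewrite /c; lra.
rewrite ler_lnp; try nra.
Qed.

Lemma Phi_hi (mu s a : R) : 0 < mu -> 0 <= s -> 0 <= a -> a <= 1 ->
  Phi mu (a + s) <= Phi mu (1 + s) / Phi mu 1 * Phi mu a.
Proof.
move=> m0 s0 a0 a1.
have P1 : 0 < Phi mu 1 by rewrite Phi_exp; [apply: mulr_gt0 => //; exact: expR_gt0|lra].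
rewrite mulrAC ler_pdivlMr // !Phi_exp; try lra.
set c := (-1 - mu).
rewrite [X in X <= _](_ : _ = mu * (mu * (expR (c * ln (1 + (a + s))) * expR (c * ln (1 + 1))))); last by ring.
rewrite [X in _ <= X](_ : _ = mu * (mu * (expR (c * ln (1 + (1 + s))) * expR (c * ln (1 + a))))); last by ring.
apply: ler_wpM2l; first lra.
apply: ler_wpM2l; first lra.
rewrite -!expRD ler_expR -!mulrDr -!lnMp; try lra.
rewrite ler_nM2l; last by rewrite /c; lra.
rewrite ler_lnp; try nra.
Qed.

Lemma mPhi (mu : R) (h : R * R -> R) : measurable_fun setT h ->
  measurable_fun setT (fun p => Phi mu (h p)).
Proof.
move=> mh; rewrite /Phi; apply: measurable_funM => //.
have mh1 : measurable_fun setT (fun p => 1 + h p) by apply: measurable_funD.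
exact: (measurableT_comp (measurable_powR _) mh1).
Qed.

Lemma mEIB (mu : R) (h : R * R -> R) : measurable_fun setT h ->
  measurable_fun setT (fun p => expIntBeta mu (h p)).
Proof.
move=> mh; rewrite /expIntBeta.
have mh1 : measurable_fun setT (fun p => 1 + h p) by apply: measurable_funD.
have mh2 : measurable_fun setT (fun p => mu * ln (1 + h p)).
  apply: measurable_funM => //; exact: (measurableT_comp (@measurable_ln R) mh1).
exact: (measurableT_comp (@measurable_expR R) mh2).
Qed.

Lemma momega (sigma : R) : measurable_fun setT (fun p : R * R => omega sigma p.2).
Proof.
rewrite /omega; apply: measurable_funM => //.
have h1 : measurable_fun setT (fun p : R * R => - (p.2 ^+ 2) / (2 * sigma ^+ 2)).
  apply: measurable_funM => //; apply: measurable_funN.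
  exact: measurable_funX.
exact: (measurableT_comp (@measurable_expR R) h1).
Qed.

Lemma omega_gt0 (sigma z : R) : 0 < sigma -> 0 < omega sigma z.
Proof.
move=> s0; rewrite /omega; apply: mulr_gt0; last exact: expR_gt0.
rewrite invr_gt0; apply: mulr_gt0 => //; rewrite sqrtr_gt0.
by apply: mulr_gt0 => //; exact: pi_gt0.
Qed.

Lemma Phi_ge0 (mu y : R) : 0 < mu -> 0 <= Phi mu y.
Proof. by move=> m0; rewrite /Phi; apply: mulr_ge0; [exact: ltW|exact: powR_ge0]. Qed.

Lemma Phi_gt0 (mu y : R) : 0 < mu -> -1 < y -> 0 < Phi mu y.
Proof. by move=> m0 y0; rewrite Phi_exp //; apply: mulr_gt0 => //; exact: expR_gt0. Qed.

Lemma hbeta (mu a : R) : 0 <= a -> Phi mu a * expIntBeta mu a = beta mu a.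
Proof.
move=> a0; rewrite Phi_exp /expIntBeta /beta; last lra.
rewrite -mulrA -expRD -mulrDl (_ : -1 - mu + mu = -1); last by ring.
rewrite mulN1r expRN lnK // posrE; lra.
Qed.

Local Open Scope ring_scope.
Lemma mem_I0D (a : R) : (a \in (@I0inf R) `\ 0) = (0 < a).
Proof.
apply/idP/idP => [/set_mem [] /= |h].
  rewrite /I0inf /= in_itv /= andbT le_eqVlt => /orP [/eqP <- //|//].
apply: mem_set; split; first by rewrite /I0inf /I01 /= in_itv /= andbT ltW.
by move=> h0; rewrite h0 ltxx in h.
Qed.
Lemma mem_I01D (a : R) : (a \in (@I01 R) `\ 0) = (0 < a < 1).
Proof.
apply/idP/idP => [/set_mem [] /= |/andP [h h1]].
  rewrite /I01 /= in_itv /= le_eqVlt => /andP [/orP [/eqP <- //| ->] ->] //.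
apply: mem_set; split; first by rewrite /I0inf /I01 /= in_itv /= h1 ltW.
by move=> h0; rewrite h0 ltxx in h.
Qed.
Lemma mem_I01 (a : R) : (a \in (@I01 R)) = (0 <= a < 1).
Proof.
by apply/idP/idP => [/set_mem /= |h]; [rewrite /I01 /= in_itv|apply: mem_set; rewrite /I01 /= in_itv].
Qed.
End H.

Theorem lemma6 (R : realType) (mu sigma : R)
  (phi0 : R -> R -> R -> R) (v eta : R -> R -> R)
  (n : R -> R -> R -> R -> R) (Cxx : R) :
  0 < mu -> mu < 1 -> 0 < sigma ->
  (* phi0_eps = v + eps eta on R x [0,1) *)
  (forall eps x a, 0 < eps -> 0 <= a < 1 -> phi0 eps x a = v x a + eps * eta x a) ->
  (* v bounded *)
  (exists M : R, forall x a, 0 <= a < 1 -> `|v x a| <= M) ->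
  (* exp(- inf_x eta(x, .)) in L^1(0,1) *)
  (@lebesgue_measure R).-integrable (@I01 R)
     (fun a => ereal_sup [set (expR (- eta x a))%:E | x in [set: R]]) ->
  (* (joint) measurability of the initial data in (x, a) *)
  (forall eps, 0 < eps ->
     measurable_fun [set: R * R] (fun p : R * R => phi0 eps p.1 p.2)) ->
  (* phi0_eps Lipschitz in x, uniformly in eps in (0,1) *)
  (exists L : R, forall eps x y a, 0 < eps < 1 -> 0 <= a < 1 ->
     `|phi0 eps x a - phi0 eps y a| <= L * `|x - y|) ->
  (* lower bound with C > 0 *)
  (exists C : R, 0 < C /\ forall eps x, 0 < eps ->
     ((expR (- C / eps))%:E <
       \int[@lebesgue_measure R]_(a in @I01 R)
         \int[@lebesgue_measure R]_(z in [set: R])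
           (Phi mu a * omega sigma z * expIntBeta mu a
             * expR (- eta (x - eps * z) a))%:E)%E) ->
  (* d_x^2 phi0_eps <= Cxx distributionally *)
  (forall eps a, 0 < eps -> 0 <= a < 1 -> dist_d2_le (fun x => phi0 eps x a) Cxx) ->
  (* n_eps solves the renewal problem *)
  (forall eps, 0 < eps -> renewal_solution mu sigma eps (phi0 eps) (n eps)) ->
  forall eps t x : R, 0 < eps -> 0 < t ->
    ((Phi mu (t / eps) / Phi mu 0
        * expR ((psi eps (n eps) t x - psi eps (n eps) 0 x) / eps))%:E
      <= frakB mu sigma eps (phi0 eps) (psi eps (n eps)) t x)%E /\
    (frakB mu sigma eps (phi0 eps) (psi eps (n eps)) t x
      <= (Phi mu (1 + t / eps) / Phi mu 1
        * expR ((psi eps (n eps) t x - psi eps (n eps) 0 x) / eps))%:E)%E.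
Proof.
move=> mu0 mu1 sig0 hphi hv heta hmeas hlip hC hxx hsol eps t x e0 t0.
have [nge0 [_ [bc init]]] := hsol eps e0.
set P := psi eps (n eps) t x.
set n0 := n eps 0 x 0.
pose g (p : R * R) := omega sigma p.2 * expR (- phi0 eps (x - eps * p.2) p.1 / eps).
pose fA (p : R * R) := Phi mu p.1 * expIntBeta mu p.1 * g p.
pose fB (p : R * R) := omega sigma p.2 * Phi mu (p.1 + t / eps)
   * expR ((P - phi0 eps (x - eps * p.2) p.1) / eps) * expIntBeta mu p.1.
pose G a := (\int[@lebesgue_measure R]_(z in setT) (fA (a, z))%:E)%E.
have mphi : measurable_fun setT (fun p : R * R => phi0 eps (x - eps * p.2) p.1).
  have mp : measurable_fun setT (fun p : R * R => (x - eps * p.2, p.1)).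
    apply: measurable_fun_pair => //.
    apply: measurable_funB => //; apply: measurable_funM => //.
  exact: (measurableT_comp (hmeas eps e0) mp).
have mg : measurable_fun setT g.
  apply: measurable_funM; first exact: momega.
  have h1 : measurable_fun setT (fun p : R * R => - phi0 eps (x - eps * p.2) p.1 / eps).
    by apply: measurable_funM => //; apply: measurable_funN.
  exact: (measurableT_comp (@measurable_expR R) h1).
have mfA : measurable_fun setT fA.
  apply: measurable_funM => //; apply: measurable_funM.
  - exact: (mPhi mu _ measurable_fst).
  - exact: (mEIB mu _ measurable_fst).
have fA0 p : 0 <= fA p.
  rewrite /fA /g; apply: mulr_ge0; apply: mulr_ge0.
  - exact: Phi_ge0.
  - exact: expR_ge0.
  - exact: (ltW (omega_gt0 _ _ sig0)).
  - exact: expR_ge0.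
have fA_gt0 a z : 0 <= a -> 0 < fA (a, z).
  move=> a0; rewrite /fA /g /=; apply: mulr_gt0; apply: mulr_gt0.
  - by apply: Phi_gt0 => //; lra.
  - exact: expR_gt0.
  - exact: omega_gt0.
  - exact: expR_gt0.
have mfB : measurable_fun setT fB.
  apply: measurable_funM; last exact: (mEIB mu _ measurable_fst).
  apply: measurable_funM; first apply: measurable_funM.
  - exact: momega.
  - apply: (mPhi mu (fun p : R * R => p.1 + t / eps)); exact: measurable_funD.
  - have h1 : measurable_fun setT (fun p : R * R => (P - phi0 eps (x - eps * p.2) p.1) / eps).
      by apply: measurable_funM => //; apply: measurable_funB.
    exact: (measurableT_comp (@measurable_expR R) h1).
have fB0 p : 0 <= fB p.
  rewrite /fB; apply: mulr_ge0; first apply: mulr_ge0; first apply: mulr_ge0.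
  - exact: (ltW (omega_gt0 _ _ sig0)).
  - exact: Phi_ge0.
  - exact: expR_ge0.
  - exact: expR_ge0.
have mI01 : measurable (@I01 R) by exact: measurable_itv.
have mGm := mF fA mfA fA0.
pose Fb a := (\int[@lebesgue_measure R]_(z in setT) (beta mu a * omega sigma z * n eps 0 (x - eps * z) a)%:E)%E.
have key a : (Fb \_ ((@I0inf R) `\ 0)) a = (G \_ ((@I01 R) `\ 0)) a.
  rewrite !patchE mem_I0D mem_I01D.
  have [a0|a0] := ltP 0 a; last by [].
  have [a1|a1] := ltP a 1 => /=.
  - apply: eq_integral => z _; congr EFin.
    rewrite init // a1 /fA /g /= hbeta; last exact: ltW.
    by rewrite mulrA.
  - rewrite /Fb (eq_integral (cst 0%E)) ?integral0 //.
    move=> z _; rewrite init // ifF ?mulr0 //.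
    by apply/negbTE; rewrite -leNgt.
have mD0 : measurable ((@I0inf R) `\ 0) by apply: measurableD => //; exact: measurable_itv.
have mD1 : measurable ((@I01 R) `\ 0) by apply: measurableD.
have mGD1 : measurable_fun ((@I01 R) `\ 0) G.
  eapply measurable_funS; last exact mGm; [exact: (@measurableT _ (measurableTypeR R))|by []].
have mFb : measurable_fun ((@I0inf R) `\ 0) Fb.
  apply/(measurable_restrictT _ mD0).
  rewrite (_ : Fb \_ _ = G \_ ((@I01 R) `\ 0)); last exact/funext.
  exact/(measurable_restrictT _ mD1).
have hA : (n0%:E = \int[@lebesgue_measure R]_(a in @I01 R) G a)%E.
  have := bc 0 x (lexx 0); rewrite -/n0 => ->.
  transitivity (\int[@lebesgue_measure R]_(a in @I0inf R) Fb a)%E; first by [].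
  rewrite -(integral_setD1 (f:=Fb) (r:=0) (D:=@I0inf R)) // integral_mkcond (funext key).
  by rewrite -integral_mkcond integral_setD1.
have I01_0 : (@lebesgue_measure R (@I01 R) != 0)%E.
  by rewrite /I01 lebesgue_measure_itv /= lte_fin ltr01 /= sube0 eqe oner_eq0.
have mGI : measurable_fun (@I01 R) G.
  eapply measurable_funS; last exact mGm; [exact: (@measurableT _ (measurableTypeR R))|by []].
have A_gt0 : (0 < \int[@lebesgue_measure R]_(a in @I01 R) G a)%E.
  apply: pos_int => //.
  move=> a; rewrite /I01 /= in_itv /= => /andP [a0 _]; apply: pos_int => //.
  - apply/eqP => h; move/eqP: I01_0; apply.
    by apply: (subset_measure0 _ _ _ h) => //.
  - exact: (mG fA a mfA).
  - by move=> z _; rewrite lte_fin; exact: fA_gt0.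
have n0_gt0 : 0 < n0 by rewrite -lte_fin hA.
have hexp : expR ((P - psi eps (n eps) 0 x) / eps) = expR (P / eps) * n0.
  rewrite /psi -/n0 (_ : (P - - eps * ln n0) / eps = P / eps + ln n0); last first.
    by field; rewrite gt_eqF.
  by rewrite expRD lnK // posrE.
rewrite hexp.
set E := expR (P / eps).
have E0 : 0 < E by exact: expR_gt0.
have s0 : 0 <= t / eps by apply: divr_ge0; exact: ltW.
have P0 : 0 < Phi mu 0 by apply: Phi_gt0 => //; lra.
have P1 : 0 < Phi mu 1 by apply: Phi_gt0 => //; lra.
have r00 : 0 <= Phi mu (t / eps) / Phi mu 0 * E.
  by apply: mulr_ge0; [apply: divr_ge0; [exact: Phi_ge0|exact: ltW]|exact: ltW].
have r10 : 0 <= Phi mu (1 + t / eps) / Phi mu 1 * E.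
  by apply: mulr_ge0; [apply: divr_ge0; [exact: Phi_ge0|exact: ltW]|exact: ltW].
have hB a z : fB (a, z) = Phi mu (a + t / eps) *
    (E * (expIntBeta mu a * (omega sigma z * expR (- phi0 eps (x - eps * z) a / eps)))).
  rewrite /fB /= mulrDl expRD -/E; ring.
have hAz r a z : r * E * fA (a, z) = r * Phi mu a *
    (E * (expIntBeta mu a * (omega sigma z * expR (- phi0 eps (x - eps * z) a / eps)))).
  rewrite /fA /g /=; ring.
have K0 a z : 0 <= E * (expIntBeta mu a * (omega sigma z * expR (- phi0 eps (x - eps * z) a / eps))).
  apply: mulr_ge0; first exact: ltW.
  apply: mulr_ge0; first exact: expR_ge0.
  apply: mulr_ge0; [exact: (ltW (omega_gt0 _ _ sig0))|exact: expR_ge0].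
split.
- rewrite mulrA EFinM hA -scale2 //.
  rewrite /frakB.
  apply: (mono2 _ (fun p => Phi mu (t / eps) / Phi mu 0 * E * fA p) fB) => //.
  + by apply: measurable_funM.
  + by move=> p; apply: mulr_ge0.
  + move=> a z; rewrite /I01 /= in_itv /= => /andP [a0 a1].
    rewrite hAz hB; apply: ler_wpM2r; first exact: K0.
    exact: Phi_lo.
- rewrite mulrA EFinM hA -scale2 //.
  rewrite /frakB.
  apply: (mono2 _ fB (fun p => Phi mu (1 + t / eps) / Phi mu 1 * E * fA p)) => //.
  + by apply: measurable_funM.
  + by move=> p; apply: mulr_ge0.
  + move=> a z; rewrite /I01 /= in_itv /= => /andP [a0 a1].
    rewrite hAz hB; apply: ler_wpM2r; first exact: K0.
    by apply: Phi_hi => //; exact: ltW.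
Qed.
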